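(* Let $H$ be a finite index subgroup of $F_2$ which contains an element of odd length, and let $y\in F_2$. Then there is an $N\in\mathbb{N}$ such that the constants $a_{i,xH}$ satisfy $a_{i,xH}=0$ for every $xH\in F_2/H$ and every $i\geq N$.
   Context: $F_2$ is the free group on $a,b$, $\Xi=\{a,b,a^{-1},b^{-1}\}$, and the length of an element is the length of its reduced word in $\Xi$. Sets $\Omega_{k,xH}\subseteq\Xi$ for $k\geq -1$, $xH\in F_2/H$ are defined recursively: $\Omega_{-1,xH}=\varnothing$ for all $xH$; $\Omega_{0,yH}=\Xi$ and $\Omega_{0,xH}=\varnothing$ for $xH\neq yH$; and for $k\geq 0$, $\Omega_{k+1,zH}=\{h\in\Xi:\Omega_{k-1,zH}=\varnothing\text{ and }\Omega_{k,h^{-1}zH}\neq\varnothing\}$. For $i\geq 1$, $a_{i,xH}=|\Omega_{i,xH}|-1$ if $\Omega_{i,xH}\neq\varnothing$ and $a_{i,xH}=0$ otherwise. (These are the constants for which $|yH\cap S_n|=\sum_{i=1}^{n-1}\sum_{xH}a_{i,xH}|xH\cap S_{n-i}|$ for $n\geq2$, where $S_n$ is the set of elements of length $n$.) *)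

(* Defs.v *)
(* The free group F_2 on a,b as reduced words over
   Xi = {a,b,a^-1,b^-1}. *)
From mathcomp Require Import all_boot.
Set Implicit Arguments. Unset Strict Implicit. Unset Printing Implicit Defensive.

(* A letter is (g, s): g = false for a, true for b; s = true means inverse. *)
Definition Xi : finType := (bool * bool)%type.
Definition letter_a : Xi := (false, false).
Definition letter_b : Xi := (true, false).
Definition linv (x : Xi) : Xi := (x.1, ~~ x.2).

Lemma linvK : involutive linv. Proof. by case=> g s; rewrite /linv /= negbK. Qed.

Definition reduced (w : seq Xi) : bool :=
  if w is x :: t then path (fun u v => v != linv u) x t else true.

Definition rstep (x : Xi) (acc : seq Xi) : seq Xi :=
  if acc is y :: t then (if y == linv x then t else x :: acc) else [:: x].
Definition reduce (w : seq Xi) : seq Xi := foldr rstep [::] w.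

Lemma reduce_reduced w : reduced (reduce w).
Proof.
elim: w => [|x w] //=.
move: (reduce w) => [|y t] //= Hp.
case: eqP => [_|/eqP ne]; last by rewrite /= Hp andbT.
by case: t Hp => //= z t /andP[].
Qed.

Definition F2 := {w : seq Xi | reduced w}.
Definition F2one : F2 := exist _ [::] is_true_true.
Definition F2mul (u v : F2) : F2 :=
  exist _ (reduce (val u ++ val v)) (reduce_reduced _).
Definition F2inv (u : F2) : F2 :=
  exist _ (reduce (rev (map linv (val u)))) (reduce_reduced _).
Definition F2let (h : Xi) : F2 := exist _ [:: h] is_true_true.
Definition F2len (u : F2) : nat := size (val u).

Definition is_subgroup (H : pred F2) : Prop :=
  H F2one /\ (forall u v, H u -> H v -> H (F2mul u (F2inv v))).

Definition finite_index (H : pred F2) : Prop :=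
  exists reps : seq F2, forall x : F2, exists2 r, r \in reps & H (F2mul (F2inv r) x).

(* Coset equality: xH = zH  iff  x^-1 z \in H. The sets Omega_{k,zH} are
   defined on representatives z; OmegaPair H y k z = (Omega_{k-1,zH}, Omega_{k,zH}). *)
Fixpoint OmegaPair (H : pred F2) (y : F2) (k : nat) (z : F2) : {set Xi} * {set Xi} :=
  match k with
  | 0 => (set0, if H (F2mul (F2inv y) z) then setT else set0)
  | k'.+1 =>
      ((OmegaPair H y k' z).2,
       [set h : Xi | ((OmegaPair H y k' z).1 == set0)
                     && ((OmegaPair H y k' (F2mul (F2inv (F2let h)) z)).2 != set0)])
  end.

Definition Omega (H : pred F2) (y : F2) (k : nat) (z : F2) : {set Xi} :=
  (OmegaPair H y k z).2.

(* a_{i,xH} (meaningful for i >= 1) *)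
Definition a_const (H : pred F2) (y : F2) (i : nat) (x : F2) : nat :=
  if Omega H y i x == set0 then 0 else #|Omega H y i x| - 1.

(* Main.v *)
Require Import Defs.
From mathcomp Require Import all_boot zify.
Set Implicit Arguments. Unset Strict Implicit. Unset Printing Implicit Defensive.

Lemma rstep_reduced x w : reduced w -> reduced (rstep x w).
Proof.
case: w => [|y t] //= Hp.
case: eqP => [_|/eqP ne]; last by rewrite /= Hp andbT.
by case: t Hp => //= z t /andP[].
Qed.

Lemma foldr_reduced t s : reduced t -> reduced (foldr rstep t s).
Proof. by move=> Ht; elim: s => //= x s IH; apply: rstep_reduced. Qed.

Lemma reduce_id w : reduced w -> reduce w = w.
Proof.
elim: w => // x w IH /= Hp.
have Hw : reduced w by case: w Hp {IH} => //= y t /andP[].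
rewrite IH //; case: w Hp {IH Hw} => //= y t /andP[ne _].
by rewrite (negbTE ne).
Qed.

Lemma rcancel x w : reduced w -> rstep x (rstep (linv x) w) = w.
Proof.
case: w => [|y t] /=; first by rewrite eqxx.
case: eqP => [->|/eqP ne] Hp; last by rewrite /= eqxx.
rewrite linvK in Hp *.
case: t Hp => [|z t] //= /andP[nz _]; by rewrite (negbTE nz).
Qed.

Lemma act_rstep t x s : reduced t ->
  foldr rstep t (rstep x s) = rstep x (foldr rstep t s).
Proof.
move=> Ht; case: s => [|y s] //=.
case: eqP => [->|_] //=.
by rewrite rcancel // foldr_reduced.
Qed.

Lemma act_reduce t u : reduced t -> foldr rstep t (reduce u) = foldr rstep t u.
Proof.
move=> Ht; elim: u => //= x u IH.
by rewrite act_rstep // IH.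
Qed.

Lemma reduce_cat u v : reduce (u ++ v) = foldr rstep (reduce v) u.
Proof. by rewrite /reduce foldr_cat. Qed.

Lemma reduceCl u v : reduce (reduce u ++ v) = reduce (u ++ v).
Proof. by rewrite !reduce_cat act_reduce // reduce_reduced. Qed.

Lemma reduceCr u v : reduce (u ++ reduce v) = reduce (u ++ v).
Proof. by rewrite !reduce_cat reduce_id // reduce_reduced. Qed.

Definition winv (w : seq Xi) := rev (map linv w).
Lemma winvK : involutive winv.
Proof. by move=> w; rewrite /winv map_rev revK (mapK linvK). Qed.

Lemma winv_cons x u : winv (x :: u) = rcons (winv u) (linv x).
Proof. by rewrite /winv /= rev_cons. Qed.

Lemma inv_l u : reduce (winv u ++ u) = [::].
Proof.
elim: u => // x u IH.
rewrite winv_cons cat_rcons -reduceCr.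
have -> : reduce [:: linv x, x & u] = reduce u.
  rewrite /= -{2}(linvK x) rcancel //; exact: reduce_reduced.
by rewrite reduceCr.
Qed.

Lemma inv_r u : reduce (u ++ winv u) = [::].
Proof. by rewrite -{1}(winvK u) inv_l. Qed.

Lemma reduce_nil_r a b : reduce b = [::] -> reduce (a ++ b) = reduce a.
Proof. by move=> Hb; rewrite -reduceCr Hb cats0. Qed.

Lemma reduce_nil_l a b : reduce a = [::] -> reduce (a ++ b) = reduce b.
Proof. by move=> Ha; rewrite -reduceCl Ha. Qed.

Lemma winv_reduce v : reduce (winv (reduce v)) = reduce (winv v).
Proof.
rewrite -(reduce_nil_r (winv (reduce v)) (inv_r v)) catA -reduceCl.
by rewrite -(reduceCr (winv (reduce v))) inv_l.
Qed.

Definition elt (w : seq Xi) : F2 := exist _ (reduce w) (reduce_reduced w).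

Lemma elt_eq u v : reduce u = reduce v -> elt u = elt v.
Proof.
rewrite /elt => E. move: (reduce_reduced u) (reduce_reduced v). rewrite E => p q.
by rewrite (bool_irrelevance p q).
Qed.

Lemma elt_val (z : F2) : elt (val z) = z.
Proof.
case: z => w p; rewrite /elt /=.
move: (reduce_reduced w); rewrite reduce_id // => q.
by rewrite (bool_irrelevance p q).
Qed.

Section S.
Variables (H : pred F2) (y : F2).

Definition T h z := F2mul (F2inv (F2let h)) z.

Lemma valT h z : val (T h z) = rstep (linv h) (val z).
Proof. by rewrite -(reduce_id (valP z)). Qed.

Lemma TK h z : T (linv h) (T h z) = z.
Proof.
apply: val_inj; rewrite !valT linvK rcancel //; exact: valP.
Qed.

Fixpoint W k z : bool :=
  if k is k'.+1 then [exists h, W k' (T h z)] else H (F2mul (F2inv y) z).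

Definition W2 k z := if k is k'.+2 then W k' z else false.

Lemma Wstep k h z : W k z -> W k.+1 (T h z).
Proof. by move=> Hk /=; apply/existsP; exists (linv h); rewrite TK. Qed.

Lemma P0 z : ((OmegaPair H y 0 z).2 != set0) = W 0 z && ~~ W2 0 z.
Proof.
rewrite /= andbT; case: (H _) => //=; last by rewrite eqxx.
by apply/set0Pn; exists letter_a; rewrite inE.
Qed.

Lemma OP_S k z : (OmegaPair H y k.+1 z).2 = [set h | ((OmegaPair H y k z).1 == set0) && ((OmegaPair H y k (T h z)).2 != set0)].
Proof. by []. Qed.
Lemma OP_S1 k z : (OmegaPair H y k.+1 z).1 = (OmegaPair H y k z).2.
Proof. by []. Qed.

Lemma Omega_char k : (forall z, ((OmegaPair H y k z).2 != set0) = W k z && ~~ W2 k z)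
  /\ (forall z, ((OmegaPair H y k.+1 z).2 != set0) = W k.+1 z && ~~ W2 k.+1 z).
Proof.
elim: k => [|k [IH1 IH2]].
  split=> z; first exact: P0.
  rewrite andbT OP_S; apply/set0Pn/existsP => [[h]|[h Hh]].
    by rewrite inE P0 andbT eqxx /= => Hh; exists h.
  by exists h; rewrite inE P0 /= andbT eqxx.
split=> // z.
rewrite OP_S OP_S1.
apply/set0Pn/idP => [[h]|].
  rewrite inE IH2 => /and3P[A Wh nW2].
  apply/andP; split; first by apply/existsP; exists h.
  apply/negP => Wk.
  move: Wk A => /= Wk; rewrite -[_ == set0]negbK IH1 Wk /= negbK.
  case: k IH1 IH2 Wh nW2 Wk => [|k] IH1 IH2 Wh nW2 Wk; first by [].
  case: k IH1 IH2 Wh nW2 Wk => [|k''] IH1 IH2 Wh nW2 Wk; first by [].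
  move=> Wk''; case/negP: nW2; exact: (Wstep h Wk'').
move=> /andP[Wz nWk].
have [h Wh] : exists h, W k.+1 (T h z) by apply/existsP.
exists h; rewrite inE IH2 Wh /=.
rewrite -[_ == set0]negbK IH1 negb_and negbK.
move: nWk => /= nWk; rewrite nWk /=.
case: k IH1 IH2 nWk Wh Wz => [|k] IH1 IH2 nWk Wh Wz; first by [].
apply/negP => Wk; case/negP: nWk.
by apply/existsP; exists h.
Qed.
End S.

Section S.
Variables (H : pred F2) (y : F2).
Hypothesis subH : is_subgroup H.

Definition Hw w := H (elt w).

Lemma Hw_eq u v : reduce u = reduce v -> Hw u = Hw v.
Proof. by move=> E; rewrite /Hw (elt_eq E). Qed.

Lemma Hw_inv v : Hw v -> Hw (winv v).
Proof.
move=> Hv; case: subH => H1 Hm.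
have := Hm _ _ H1 Hv; rewrite /Hw => Hx.
suff <- : F2mul F2one (F2inv (elt v)) = elt (winv v) by [].
apply: elt_eq => /=; rewrite reduce_id ?reduce_reduced //; exact: winv_reduce.
Qed.

Lemma Hw_mul u v : Hw u -> Hw v -> Hw (u ++ v).
Proof.
move=> Hu /Hw_inv Hv; case: subH => H1 Hm.
have := Hm _ _ Hu Hv; rewrite /Hw => Hx.
suff <- : F2mul (elt u) (F2inv (elt (winv v))) = elt (u ++ v) by [].
apply: elt_eq => /=; rewrite reduceCl reduceCr -/(winv (reduce (winv v))) -reduceCr winv_reduce reduceCr winvK //.
Qed.

Lemma Wchar j : forall s z, size s = j -> Hw (winv (val y) ++ s ++ val z) -> W H y j z.
Proof.
elim: j => [|j IH] s z.
  case: s => // _ /= Hz; rewrite /Hw in Hz.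
  suff -> : F2mul (F2inv y) z = elt (winv (val y) ++ val z) by [].
  by apply: elt_eq; rewrite /= reduceCl.
case/lastP: s => [|s x] //; rewrite size_rcons => -[Es] Hz.
apply/existsP; exists (linv x); apply: (IH s) => //.
rewrite (@Hw_eq _ (winv (val y) ++ rcons s x ++ val z)) //.
rewrite valT linvK catA -reduceCr.
have -> : rstep x (val z) = reduce (x :: val z).
  by rewrite /= reduce_id //; exact: valP.
by rewrite !reduceCr -cats1 -!catA.
Qed.

Fixpoint pad n := if n is n'.+1 then letter_a :: linv letter_a :: pad n' else [::].

Lemma pad_nil n : reduce (pad n) = [::].
Proof. by elim: n => //= n IH; rewrite /= in IH; rewrite IH. Qed.

Lemma size_pad n : size (pad n) = 2 * n.
Proof. elim: n => //= n ->; lia. Qed.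

End S.

Lemma len_sumn (r : F2) reps : r \in reps -> F2len r <= sumn (map F2len reps).
Proof.
elim: reps => //= a l IH; rewrite inE => /orP[/eqP->|/IH]; lia.
Qed.

Lemma arith1 a c d S j n : a + (2*a + c) + S <= j -> d <= S -> n * 2 = j - (a + d + (2*a + c)) ->
  a + (c + (a + (2*n + (a + d)))) = j.
Proof. lia. Qed.

Lemma arith2 a c d S j n : a + (2*a + c) + S <= j -> d <= S -> n * 2 = j - (a + d) ->
  2*n + (a + d) = j.
Proof. lia. Qed.

Lemma Wlarge H y : is_subgroup H -> finite_index H -> (exists w, H w && odd (F2len w)) ->
  exists M, forall j x, M <= j -> W H y j x.
Proof.
move=> subH [reps Hr] [w /andP[Hw0 oddw]].
set yy := val y; set ww := val w; set Y := winv yy.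
have Hww : Hw H ww by rewrite /Hw elt_val.
exists (size yy + (2 * size yy + size ww) + sumn (map F2len reps)).
move=> j x Hj.
have [r rin Hrx] := Hr x.
have Hrx' : Hw H (winv (val r) ++ val x).
  rewrite /Hw; suff <- : F2mul (F2inv r) x = elt (winv (val r) ++ val x) by [].
  by apply: elt_eq; rewrite /= reduceCl.
have Hsr : size (val r) <= sumn (map F2len reps) := len_sumn rin.
set s0 := yy ++ winv (val r).
have E1 n t : reduce (pad n ++ t) = reduce t by exact: reduce_nil_l (pad_nil n).
have E2 t : reduce (Y ++ yy ++ t) = reduce t by rewrite catA reduce_nil_l // inv_l.
have H0 n : Hw H (Y ++ (pad n ++ s0) ++ val x).
  rewrite (@Hw_eq _ _ (winv (val r) ++ val x)) //.
  by rewrite -catA -reduceCr E1 reduceCr /s0 -catA E2.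
have Hs0 : size s0 = size yy + size (val r) by rewrite size_cat /winv size_rev size_map.
have Hodd : odd (size yy + size yy + size ww) by rewrite !oddD addbb.
have := odd_double_half (j - (size yy + size (val r))).
case: (boolP (odd (j - (size yy + size (val r))))) => Hp.
  move=> Ed.
  set n := (j - (size yy + size (val r) + (2 * size yy + size ww)))./2.
  have := odd_double_half (j - (size yy + size (val r) + (2 * size yy + size ww))).
  have -> : odd (j - (size yy + size (val r) + (2 * size yy + size ww))) = false.
    move: Hp Hodd; rewrite oddB; last by lia.
    rewrite oddB; last by lia.
    rewrite !oddD ?oddM /=; by case: (odd j); case: (odd (size yy)); case: (odd (size (sval r))); case: (odd (size ww)).
  move=> Ed2.
  apply: (@Wchar H y _ (yy ++ ww ++ Y ++ pad n ++ s0) x).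
    rewrite !size_cat size_pad /Y /winv !size_rev !size_map; rewrite -/n in Ed2.
    move: Ed2; rewrite [nat_of_bool false]/= add0n -muln2 => Ed2; exact: (arith1 Hj Hsr Ed2).
  rewrite (@Hw_eq _ _ (ww ++ (Y ++ (pad n ++ s0) ++ val x))); first exact: Hw_mul.
  by rewrite -!catA E2.
move=> Ed; set n := (j - (size yy + size (val r)))./2.
apply: (@Wchar H y _ (pad n ++ s0) x); last exact: H0.
have Ed' : n * 2 = j - (size yy + size (val r)).
  by rewrite muln2 -[RHS]odd_double_half (negbTE Hp).
rewrite !size_cat size_pad /winv !size_rev !size_map; exact: (arith2 Hj Hsr Ed').
Qed.

Theorem theorem5p1 (H : pred F2) (y : F2) :
  is_subgroup H -> finite_index H ->
  (exists w : F2, H w && odd (F2len w)) ->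
  exists N : nat, forall i : nat, 1 <= i -> N <= i ->
    forall x : F2, a_const H y i x = 0.
Proof.
move=> sH fH oH.
have [M HM] := Wlarge y sH fH oH.
exists M.+2 => i _ Hi x.
rewrite /a_const.
suff -> : Omega H y i x == set0 by [].
have [C _] := Omega_char H y i.
rewrite -[_ == set0]negbK /Omega C.
clear C; case: i Hi => [|[|k]] // Hk.
by rewrite /= (HM k x) // andbF.
Qed.
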